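(* Let $\Psi$ be a forest algebra formula that only has green and yellow nodes and let $v$ be a yellow node. Let $\mathsf{lp}(v)=v_1\cdots v_k$ be the long path starting at $v$. Then $k\ge 8$ and $|\mathsf{balance}(v_i)|\ge 2$ for $1\le i\le 8$.
   Context: A forest algebra formula is a binary parse tree (inner nodes labelled by forest algebra operations, leaves by forests/contexts). $\Psi_v$ is the subformula rooted at $v$, $|\Psi_v|$ its number of leaves, $\mathsf{height}(\Psi_v)$ the maximal number of nodes on a root-to-leaf path of $\Psi_v$. For an inner node $v$, $\mathsf{balance}(v)=\mathsf{height}(\Psi_{\text{right child}})-\mathsf{height}(\Psi_{\text{left child}})$; leaves have balance $0$. Long path: $\mathsf{lp}(v)=v$ if $\mathsf{balance}(v)=0$, $v\cdot\mathsf{lp}(\text{left child of }v)$ if $\mathsf{balance}(v)<0$, $v\cdot\mathsf{lp}(\text{right child of }v)$ if $\mathsf{balance}(v)>0$. Colors ($\log$ base 2): $v$ is green if $\mathsf{height}(\Psi_v)\le10\log|\Psi_v|$, yellow if $\mathsf{height}(\Psi_v)-1\le10\log|\Psi_v|<\mathsf{height}(\Psi_v)$, red otherwise. *)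

(* Defs.v *)
From Stdlib Require Import Reals ZArith List.
Open Scope R_scope.

(* A forest algebra formula: a binary parse tree whose inner nodes are
   labelled by forest algebra operations (type Op) and whose leaves are
   labelled by forests/contexts (type Lf).  The lemma only concerns the
   shape of the tree, so the label types are kept abstract. *)
Inductive formula (Op Lf : Type) : Type :=
| FLeaf : Lf -> formula Op Lf
| FNode : Op -> formula Op Lf -> formula Op Lf -> formula Op Lf.
Arguments FLeaf {Op Lf} _.
Arguments FNode {Op Lf} _ _ _.

Section F.
Context {Op Lf : Type}.

Fixpoint fsize (t : formula Op Lf) : nat :=
  match t with
  | FLeaf _ => 1
  | FNode _ l r => fsize l + fsize r
  end.

Fixpoint height (t : formula Op Lf) : nat :=
  match t with
  | FLeaf _ => 1
  | FNode _ l r => S (Nat.max (height l) (height r))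
  end.

Definition is_inner (t : formula Op Lf) : Prop :=
  match t with FLeaf _ => False | FNode _ _ _ => True end.

Definition balance (t : formula Op Lf) : Z :=
  match t with
  | FLeaf _ => 0%Z
  | FNode _ l r => (Z.of_nat (height r) - Z.of_nat (height l))%Z
  end.

(* long path lp(v), as the list of the subformulas Psi_{v_1}, ..., Psi_{v_k} *)
Fixpoint lp (t : formula Op Lf) : list (formula Op Lf) :=
  match t with
  | FLeaf _ => t :: nil
  | FNode _ l r =>
      match balance t with
      | Z0 => t :: nil
      | Zneg _ => t :: lp l
      | Zpos _ => t :: lp r
      end
  end.

Definition log2 (x : R) : R := ln x / ln 2.

Definition green (t : formula Op Lf) : Prop :=
  INR (height t) <= 10 * log2 (INR (fsize t)).

Definition yellow (t : formula Op Lf) : Prop :=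
  INR (height t) - 1 <= 10 * log2 (INR (fsize t)) /\
  10 * log2 (INR (fsize t)) < INR (height t).

Definition red (t : formula Op Lf) : Prop := ~ green t /\ ~ yellow t.

Inductive subformula : formula Op Lf -> formula Op Lf -> Prop :=
| sub_refl t : subformula t t
| sub_left o l r s : subformula s l -> subformula s (FNode o l r)
| sub_right o l r s : subformula s r -> subformula s (FNode o l r).

End F.

(* Main.v *)
Require Import Defs.
From Stdlib Require Import Reals ZArith List Lia Lra.

Definition xx : R := exp (ln 2 / 10).

Lemma ln2_pos : (0 < ln 2)%R.
Proof. rewrite <- ln_1. apply ln_increasing; lra. Qed.

Lemma exp_pow_nat (a : R) (n : nat) : (exp a ^ n = exp (INR n * a))%R.
Proof.
  induction n as [|n IH]; simpl pow.
  - simpl. rewrite Rmult_0_l, exp_0. reflexivity.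
  - rewrite IH, S_INR, <- exp_plus. f_equal. ring.
Qed.

Lemma xx_gt1 : (1 < xx)%R.
Proof. unfold xx. rewrite <- exp_0. apply exp_increasing. pose proof ln2_pos. lra. Qed.

Lemma xx10 : (xx ^ 10 = 2)%R.
Proof. unfold xx. rewrite exp_pow_nat. simpl INR.
  replace ((1+1+1+1+1+1+1+1+1+1) * (ln 2 / 10))%R with (ln 2) by field.
  apply exp_ln. lra. Qed.

Lemma exp_le_mono a b : (a <= b -> exp a <= exp b)%R.
Proof. intros H. destruct (Rle_lt_or_eq_dec _ _ H) as [H1|H1].
  left; apply exp_increasing; auto. rewrite H1; lra. Qed.

Section S.
Context {Op Lf : Type}.

Definition allP (t : formula Op Lf) : Prop :=
  forall w, subformula w t -> (xx ^ (height w - 1) <= INR (fsize w))%R.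

Lemma height_ge1 (t : formula Op Lf) : (1 <= height t)%nat.
Proof. destruct t; simpl; lia. Qed.

Lemma sub_trans (a b c : formula Op Lf) : subformula a b -> subformula b c -> subformula a c.
Proof. intros H1 H2. revert H1. induction H2; intros H1; auto. apply sub_left; auto. apply sub_right; auto. Qed.

Lemma allP_l o (l r : formula Op Lf) : allP (FNode o l r) -> allP l.
Proof. intros H w Hw. apply H. apply sub_left; auto. Qed.
Lemma allP_r o (l r : formula Op Lf) : allP (FNode o l r) -> allP r.
Proof. intros H w Hw. apply H. apply sub_right; auto. Qed.

Lemma xpow_le m n : (m <= n)%nat -> (xx ^ m <= xx ^ n)%R.
Proof. intros; apply Rle_pow; auto. pose proof xx_gt1; lra. Qed.

Lemma xpow_pos m : (0 < xx ^ m)%R.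
Proof. apply pow_lt. pose proof xx_gt1; lra. Qed.

Lemma core (k hc hd : nat) (nc nd : R) :
  (k <= 7)%nat -> (hd <= hc)%nat -> (hc <= S hd)%nat -> (1 <= hd)%nat ->
  (xx ^ (hc - 1) <= nc)%R -> (xx ^ (hd - 1) <= nd)%R ->
  (nc + nd < xx ^ (S hc + k))%R -> False.
Proof.
  intros Hk H1 H2 H3 Hc Hd Hlt.
  destruct hd as [|a]; [lia|]. replace (S a - 1)%nat with a in Hd by lia.
  pose proof xx_gt1 as Hx. pose proof (xpow_pos a) as Ha.
  assert (H10 : (xx ^ (a + 10) = 2 * xx ^ a)%R) by (rewrite pow_add, xx10; ring).
  destruct (Nat.eq_dec hc (S a)) as [E|E].
  - subst hc. replace (S a - 1)%nat with a in Hc by lia.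
    assert (xx ^ (S (S a) + k) <= xx ^ (a + 9))%R by (apply xpow_le; lia).
    assert (xx ^ (a + 9) < xx ^ (a + 10))%R.
    { rewrite !pow_add. apply Rmult_lt_compat_l; auto.
      replace 10%nat with (S 9) by reflexivity. simpl pow at 2.
      pose proof (xpow_pos 9). rewrite <- (Rmult_1_l (xx ^ 9)) at 1.
      apply Rmult_lt_compat_r; auto. }
    lra.
  - assert (hc = S (S a)) by lia. subst hc.
    replace (S (S a) - 1)%nat with (S a) in Hc by lia.
    assert (xx ^ (S (S (S a)) + k) <= xx ^ (a + 10))%R by (apply xpow_le; lia).
    assert (xx ^ a < xx ^ (S a))%R.
    { simpl pow. rewrite <- (Rmult_1_l (xx ^ a)) at 1.
      apply Rmult_lt_compat_r; auto. }
    lra.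
Qed.

Lemma fsize_pos (t : formula Op Lf) : (0 <= INR (fsize t))%R.
Proof. apply pos_INR. Qed.

Lemma step (k : nat) (t : formula Op Lf) :
  (k <= 7)%nat -> (2 <= height t)%nat -> allP t ->
  (INR (fsize t) < xx ^ (height t + k))%R ->
  exists c, lp t = t :: lp c /\ (2 <= Z.abs (balance t))%Z /\
    (2 <= height c)%nat /\ allP c /\ (INR (fsize c) < xx ^ (height c + S k))%R.
Proof.
  intros Hk Hh HP Hn.
  destruct t as [lf | o l r]; [simpl in Hh; lia|].
  pose proof (HP _ (sub_refl _)) as _.
  pose proof (allP_l _ _ _ HP) as Pl. pose proof (allP_r _ _ _ HP) as Pr.
  pose proof (Pl l (sub_refl _)) as Hl. pose proof (Pr r (sub_refl _)) as Hr.
  pose proof (height_ge1 l). pose proof (height_ge1 r).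
  pose proof (fsize_pos l). pose proof (fsize_pos r).
  cbn [fsize height] in Hn. rewrite plus_INR in Hn.
  assert (Hbal : (2 <= Z.abs (balance (FNode o l r)))%Z).
  { simpl balance. destruct (Z_le_gt_dec 2 (Z.abs (Z.of_nat (height r) - Z.of_nat (height l)))) as [|G]; auto.
    exfalso.
    destruct (Nat.le_ge_cases (height l) (height r)).
    - apply (core k (height r) (height l) (INR (fsize r)) (INR (fsize l))); auto; try lia.
      replace (S (height r) + k)%nat with (S (Nat.max (height l) (height r)) + k)%nat by lia. lra.
    - apply (core k (height l) (height r) (INR (fsize l)) (INR (fsize r))); auto; try lia.
      replace (S (height l) + k)%nat with (S (Nat.max (height l) (height r)) + k)%nat by lia. lra. }
  assert (Hl3 : (height r + 2 <= height l \/ height l + 2 <= height r)%nat).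
  { simpl balance in Hbal. lia. }
  destruct Hl3 as [G|G].
  - exists l. split.
    { simpl lp. simpl balance. destruct (Z.of_nat (height r) - Z.of_nat (height l))%Z eqn:E; auto; lia. }
    split; auto. split; [lia|]. split; auto.
    replace (height l + S k)%nat with (S (Nat.max (height l) (height r)) + k)%nat by lia. lra.
  - exists r. split.
    { simpl lp. simpl balance. destruct (Z.of_nat (height r) - Z.of_nat (height l))%Z eqn:E; auto; lia. }
    split; auto. split; [lia|]. split; auto.
    replace (height r + S k)%nat with (S (Nat.max (height l) (height r)) + k)%nat by lia. lra.
Qed.

Lemma iter (j : nat) : forall (k : nat) (t : formula Op Lf),
  (j + k <= 8)%nat -> (2 <= height t)%nat -> allP t ->
  (INR (fsize t) < xx ^ (height t + k))%R ->
  (j <= length (lp t))%nat /\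
  (forall i d, (i < j)%nat -> (2 <= Z.abs (balance (nth i (lp t) d)))%Z).
Proof.
  induction j as [|j IH]; intros k t Hjk Hh HP Hn.
  - split; [lia|]. intros; lia.
  - destruct (step k t) as (c & E & B & Hc & Pc & Nc); auto; try lia.
    destruct (IH (S k) c) as [IH1 IH2]; auto; try lia.
    rewrite E. split; [simpl; lia|].
    intros [|i] d Hi; simpl; auto. apply IH2. lia.
Qed.

End S.

Lemma fsize_ge1 {Op Lf : Type} (t : formula Op Lf) : (1 <= fsize t)%nat.
Proof. induction t; simpl; lia. Qed.

Lemma xpow_eq (m : nat) : (xx ^ m = exp (INR m * (ln 2 / 10)))%R.
Proof. unfold xx. apply exp_pow_nat. Qed.

Theorem lemma3p10 (Op Lf : Type) (Psi v : formula Op Lf) :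
  (forall w, subformula w Psi -> green w \/ yellow w) ->
  subformula v Psi -> is_inner v -> yellow v ->
  (8 <= length (lp v))%nat /\
  (forall i, (i < 8)%nat -> (2 <= Z.abs (balance (nth i (lp v) v)))%Z).
Proof.
  intros HPsi Hv Hin Hy.
  pose proof ln2_pos as L.
  assert (HP : allP v).
  { intros w Hw. pose proof (sub_trans _ _ _ Hw Hv) as Hw'.
    assert (Hge : (INR (height w) - 1 <= 10 * log2 (INR (fsize w)))%R).
    { destruct (HPsi w Hw') as [G|[Y1 Y2]]; unfold green in *; lra. }
    unfold log2 in Hge.
    assert (Hpos : (0 < INR (fsize w))%R).
    { apply lt_0_INR. pose proof (fsize_ge1 w). lia. }
    rewrite xpow_eq. rewrite <- (exp_ln (INR (fsize w))) by exact Hpos.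
    apply exp_le_mono. pose proof (height_ge1 w).
    rewrite minus_INR by lia. simpl INR.
    set (q := ln (INR (fsize w))) in *.
    assert (E : (10 * (q / ln 2) * (ln 2 / 10) = q)%R) by (field; lra).
    rewrite <- E. apply Rmult_le_compat_r; [|exact Hge].
    left. apply Rdiv_lt_0_compat; lra. }
  assert (Hn : (INR (fsize v) < xx ^ (height v + 0))%R).
  { destruct Hy as [_ Y]. unfold log2 in Y.
    assert (Hpos : (0 < INR (fsize v))%R).
    { apply lt_0_INR. pose proof (fsize_ge1 v). lia. }
    rewrite Nat.add_0_r, xpow_eq. rewrite <- (exp_ln (INR (fsize v))) by exact Hpos.
    apply exp_increasing.
    set (q := ln (INR (fsize v))) in *.
    assert (E : (10 * (q / ln 2) * (ln 2 / 10) = q)%R) by (field; lra).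
    rewrite <- E. apply Rmult_lt_compat_r; [|exact Y].
    apply Rdiv_lt_0_compat; lra. }
  assert (Hh : (2 <= height v)%nat).
  { destruct v; simpl in Hin; [contradiction|]. simpl. pose proof (height_ge1 v1). lia. }
  destruct (iter 8 0 v) as [A B]; auto.
Qed.
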